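(* Let $\mathcal{X}\subset\mathbb{R}^d$ be bounded, let $\mathcal{M}_f$ be a set of finite (nonzero) measures on $\mathcal{X}$, set $\mathcal{F}:=\{\Lambda^*\mid\Lambda\in\mathcal{M}_f\}$, and let $S':\mathcal{F}\times\mathcal{X}\to\mathbb{R}$ be a (strictly) consistent scoring function for $\mathrm{id}_{\mathcal{F}}$. Define $S:\mathcal{F}\times\mathbb{M}_0\to\mathbb{R}$ by $$S(\Lambda^*,\{y_1,\dots,y_n\}):=\sum_{i=1}^n S'(\Lambda^*,y_i)$$ for $n\in\mathbb{N}$ and $S(\Lambda^*,\emptyset)=0$. Then $S$ is consistent for the normalized intensity measure, i.e. for every finite point process $\Phi$ on $\mathcal{X}$ with intensity measure $\Lambda\in\mathcal{M}_f$ (for which the expected scores exist) and every $Q\in\mathcal{M}_f$, $\mathbb{E}S(Q^*,\Phi)\ge\mathbb{E}S(\Lambda^*,\Phi)$. It is strictly consistent (equality forces $Q^*=\Lambda^*$) if $S'$ is strictly consistent.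
   Context: $\mathbb{M}_0$ denotes the space of finite counting measures on $\mathcal{X}$; a realization is written as the set of its points $\{y_1,\dots,y_n\}$. For a finite measure $\Lambda$ on $\mathcal{X}$, $|\Lambda|:=\Lambda(\mathcal{X})$ and $\Lambda^*:=\Lambda/|\Lambda|$ is its normalized measure. The intensity measure of $\Phi$ is $\Lambda(B)=\mathbb{E}\Phi(B)$. A scoring function $S'$ on $\mathcal{F}\times\mathcal{X}$ is consistent for $\mathrm{id}_{\mathcal{F}}$ if $S'(G,\cdot)$ is $F$-integrable and $\int S'(G,x)\,dF(x)\ge\int S'(F,x)\,dF(x)$ for all $F,G\in\mathcal{F}$; strictly consistent if equality implies $G=F$. *)

(* Defs.v *)
From HB Require Import structures.
From mathcomp Require Import all_boot all_order all_algebra.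
From mathcomp Require Import all_classical all_reals all_analysis.
Set Implicit Arguments. Unset Strict Implicit. Unset Printing Implicit Defensive.
Import Order.TTheory GRing.Theory Num.Theory.
Local Open Scope classical_set_scope.
Local Open Scope ring_scope.
Local Open Scope ereal_scope.

(* The ambient space R^n, with its (product = Borel) sigma-algebra. *)
Notation Rn R n := (n.-tuple R) (only parsing).

Definition origin (R : realType) (n : nat) : Rn R n := [tuple of nseq n 0%R].

Definition bounded_Rn (R : realType) (n : nat) (X : set (Rn R n)) : Prop :=
  exists M : R, forall x, X x -> forall i : 'I_n, (`|tnth x i| <= M)%R.

Definition finite_nonzero_on (R : realType) (n : nat) (X : set (Rn R n))
  (L : {measure set (Rn R n) -> \bar R}) : Prop :=
  0 < L [set: Rn R n] < +oo /\ L (~` X) = 0.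

(* normalized measure L^* = L / |L| (the fallback of mnormalize is only used
   when |L| is 0 or +oo, which never happens for elements of M_f). *)
Definition normalize (R : realType) (n : nat)
  (L : {measure set (Rn R n) -> \bar R}) : probability (Rn R n) R :=
  mnormalize L (\d_(origin R n)).

Definition Fcal (R : realType) (n : nat)
  (Mf : set {measure set (Rn R n) -> \bar R}) : set (probability (Rn R n) R) :=
  [set normalize L | L in Mf].

Definition consistent (R : realType) (n : nat) (X : set (Rn R n))
  (Mf : set {measure set (Rn R n) -> \bar R})
  (S' : probability (Rn R n) R -> Rn R n -> R) : Prop :=
  forall F G, Fcal Mf F -> Fcal Mf G ->
    F.-integrable X (fun x => (S' G x)%:E) /\
    \int[F]_(x in X) (S' G x)%:E >= \int[F]_(x in X) (S' F x)%:E.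

Definition strictly_consistent (R : realType) (n : nat) (X : set (Rn R n))
  (Mf : set {measure set (Rn R n) -> \bar R})
  (S' : probability (Rn R n) R -> Rn R n -> R) : Prop :=
  consistent X Mf S' /\
  forall F G, Fcal Mf F -> Fcal Mf G ->
    \int[F]_(x in X) (S' G x)%:E = \int[F]_(x in X) (S' F x)%:E ->
    (G : set (Rn R n) -> \bar R) = F.

(* S(G, {y_1,...,y_n}) := sum_i S'(G, y_i); S(G, empty) = 0.
   A realization of a finite point process is a finite list of points
   (with multiplicities); the sum does not depend on the order. *)
Definition Sc (R : realType) (n : nat)
  (S' : probability (Rn R n) R -> Rn R n -> R)
  (G : probability (Rn R n) R) (s : seq (Rn R n)) : R :=
  (\sum_(y <- s) S' G y)%R.

Definition npoints (R : realType) (n : nat) (B : set (Rn R n)) (s : seq (Rn R n)) : nat :=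
  count (fun y => `[< B y >]) s.

Definition finite_point_process (R : realType) (n : nat) (X : set (Rn R n))
  (dO : measure_display) (Omega : measurableType dO)
  (Phi : Omega -> seq (Rn R n)) : Prop :=
  (forall w y, y \in Phi w -> X y) /\
  (forall B, measurable B -> measurable_fun [set: Omega] (fun w => (npoints B (Phi w))%:R : R)).

Definition intensity_measure (R : realType) (n : nat)
  (dO : measure_display) (Omega : measurableType dO) (P : probability Omega R)
  (Phi : Omega -> seq (Rn R n)) (L : {measure set (Rn R n) -> \bar R}) : Prop :=
  forall B, measurable B -> \int[P]_w ((npoints B (Phi w))%:R)%:E = L B.

(* Main.v *)
Require Import Defs.
From HB Require Import structures.
From mathcomp Require Import all_boot all_order all_algebra.
From mathcomp Require Import all_classical all_reals all_analysis.
Import Order.TTheory GRing.Theory Num.Theory.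
Local Open Scope classical_set_scope.
Local Open Scope ring_scope.
Local Open Scope ereal_scope.
From mathcomp Require Import measurable_realfun.
From mathcomp Require Import lra.
Import HBNNSimple.
Lemma posneg_split (R : realType) (a : R) : a = (Num.max a 0 - Num.max (- a) 0)%R.
Proof. by case: (leP 0%R a) => h; case: (leP 0%R (-a)%R) => h'; lra. Qed.
Section campbell.
Variables (R : realType) (d : measure_display) (T : measurableType d).
Definition cnt (B : set T) (s : seq T) : nat := count (fun y => `[< B y >]) s.

Lemma cnt_indic (B : set T) s : ((cnt B s)%:R : R) = (\sum_(y <- s) \1_B y)%R.
Proof.
elim: s => [|y s IH]; first by rewrite big_nil.
rewrite big_cons /= natrD IH indicE; congr (_ + _)%R.


Qed.

Lemma sum_nnsfun (h : {nnsfun T >-> R}) (s : seq T) :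
  \sum_(y <- s) (h y)%:E =
  \sum_(r \in range h) (`|r| * (cnt (h @^-1` [set r]) s)%:R)%:E.
Proof.
rewrite sumEFin.
have fin : finite_set (range h) by exact: fimfunP.
rewrite fsbig_finite//= sumEFin; congr EFin.
under eq_bigr do rewrite fimfunE fsbig_finite//=.
rewrite exchange_big /=; apply: eq_big_seq => r.
rewrite in_fset_set// inE => -[x _ <-].
rewrite cnt_indic mulr_sumr ger0_norm//.
Qed.

Lemma cnt1 (B : set T) x : ((cnt B [:: x])%:R : R) = \1_B x.
Proof. by rewrite cnt_indic big_seq1. Qed.

Variables (dO : measure_display) (Omega : measurableType dO)
  (P : probability Omega R) (mu : measure T R) (Phi : Omega -> seq T) (c : R).
Hypotheses (c0 : (0 <= c)%R)
 (Hm : forall B, measurable B -> measurable_fun setT (fun w => ((cnt B (Phi w))%:R : R)))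
 (Hi : forall B, measurable B -> \int[P]_w ((cnt B (Phi w))%:R)%:E = c%:E * mu B).

Lemma meas_nnsfun (h : {nnsfun T >-> R}) :
  measurable_fun setT (fun w => \sum_(y <- Phi w) (h y)%:E : \bar R).
Proof.
have fin : finite_set (range h) by exact: fimfunP.
rewrite [X in measurable_fun _ X](_ : _ = fun w =>
  \sum_(r <- finmap.enum_fset (fset_set (range h)))
     (`|r| * (cnt (h @^-1` [set r]) (Phi w))%:R)%:E); last first.
  by apply/funext => w; rewrite sum_nnsfun fsbig_finite.
apply: emeasurable_sum => r.
apply/measurable_realfun.measurable_EFinP.
apply: measurable_realfun.measurable_funM => //.
exact: Hm.
Qed.

Lemma int_nnsfun (h : {nnsfun T >-> R}) :
  \int[P]_w (\sum_(y <- Phi w) (h y)%:E) = c%:E * \int[mu]_x (h x)%:E.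
Proof.
have fin : finite_set (range h) by exact: fimfunP.
rewrite (eq_integral (fun w => \sum_(r \in range h) (`|r| * (cnt (h @^-1` [set r]) (Phi w))%:R)%:E)); last first.
  by move=> w _; rewrite sum_nnsfun.
have hx x : (h x)%:E = \sum_(r \in range h) (`|r| * (cnt (h @^-1` [set r]) [:: x])%:R)%:E.
  by rewrite -sum_nnsfun big_seq1.
rewrite [X in _ = _ * X](eq_integral (fun x => \sum_(r \in range h) (`|r| * (cnt (h @^-1` [set r]) [:: x])%:R)%:E)); last first.
  by move=> x _; rewrite hx.
have m1 : forall r, measurable_fun setT (fun w => (`|r| * (cnt (h @^-1` [set r]) (Phi w))%:R)%:E : \bar R).
  move=> r; apply/measurable_realfun.measurable_EFinP.
  apply: measurable_realfun.measurable_funM => //; exact: Hm.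
have p1 : forall r w, setT w -> 0 <= (`|r| * (cnt (h @^-1` [set r]) (Phi w))%:R)%:E.
  by move=> r w _; rewrite lee_fin mulr_ge0.
have m2 : forall r, measurable_fun setT (fun x => (`|r| * (cnt (h @^-1` [set r]) [:: x])%:R)%:E : \bar R).
  move=> r; apply/measurable_realfun.measurable_EFinP.
  apply: measurable_realfun.measurable_funM => //.
  rewrite (_ : (fun x => _) = \1_(h @^-1` [set r])); last by apply/funext => x; rewrite cnt1.
  exact: measurable_indic.
have p2 : forall r x, setT x -> 0 <= (`|r| * (cnt (h @^-1` [set r]) [:: x])%:R)%:E.
  by move=> r w _; rewrite lee_fin mulr_ge0.
rewrite ge0_integral_fsum// ge0_integral_fsum//.
rewrite ge0_mule_fsumr; last by move=> r; apply: integral_ge0 => x _; rewrite lee_fin mulr_ge0.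
apply: eq_fsbigr => r _.
rewrite (eq_integral (fun w => `|r|%:E * ((cnt (h @^-1` [set r]) (Phi w))%:R)%:E)); last by move=> w _; rewrite EFinM.
rewrite [X in _ = _ * X](eq_integral (fun x => `|r|%:E * (\1_(h @^-1` [set r]) x)%:E)); last by move=> x _; rewrite EFinM cnt1.
rewrite ge0_integralZl_EFin//; last first.
  apply/measurable_realfun.measurable_EFinP; exact: Hm.
rewrite ge0_integralZl_EFin//; last first.
  apply/measurable_realfun.measurable_EFinP; exact: measurable_indic.
by rewrite Hi// integral_indic// setIT muleCA.
Qed.

Lemma campbell_ge0 (g : T -> \bar R) : measurable_fun setT g -> (forall x, 0 <= g x) ->
  measurable_fun setT (fun w => \sum_(y <- Phi w) g y : \bar R) /\
  \int[P]_w (\sum_(y <- Phi w) g y) = c%:E * \int[mu]_x g x.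
Proof.
move=> mg g0.
have [h [ndh hg]] := approximation measurableT mg (fun x _ => g0 x).
pose G k w := \sum_(y <- Phi w) (h k y)%:E.
have cvG w : G^~ w @ \oo --> \sum_(y <- Phi w) g y.
  rewrite /G; elim: (Phi w) => [|y s IH].
    under eq_fun do rewrite big_nil.
    rewrite big_nil; exact: cvg_cst.
  under eq_fun do rewrite big_cons.
  rewrite big_cons.
  apply: cvgeD => //; last exact: hg.
  by rewrite ge0_adde_def// inE ?sume_ge0.
have mG k : measurable_fun setT (G k) := meas_nnsfun (h k).
have mS : measurable_fun setT (fun w => \sum_(y <- Phi w) g y : \bar R).
  by apply: (@emeasurable_fun_cvg _ _ _ setT G) => // w _; exact: cvG.
split => //.
have G0 k w : setT w -> 0 <= G k w.
  by move=> _; apply: sume_ge0 => y _; rewrite lee_fin.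
have ndG w : setT w -> {homo G^~ w : n m / (n <= m)%N >-> n <= m}.
  move=> _ n m nm; apply: lee_sum => y _; rewrite lee_fin.
  by have := ndh n m nm; move=> /lefP.
have H1 := @cvg_monotone_convergence _ _ _ P _ measurableT _ mG G0 ndG.
have mh k : measurable_fun setT (fun x => (h k x)%:E : \bar R).
  by apply/measurable_realfun.measurable_EFinP.
have h0 k x : setT x -> 0 <= (h k x)%:E by move=> _; rewrite lee_fin.
have ndh' x : setT x -> {homo (fun k => (h k x)%:E) : n m / (n <= m)%N >-> n <= m}.
  move=> _ n m nm; rewrite lee_fin; by have := ndh n m nm; move=> /lefP.
have H2 := @cvg_monotone_convergence _ _ _ mu _ measurableT _ mh h0 ndh'.
rewrite (_ : (fun x => limn (G^~ x)) = (fun w => \sum_(y <- Phi w) g y)) in H1; last first.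
  by apply/funext => w; apply: cvg_lim => //; exact: cvG.
rewrite (_ : (fun x => limn _) = g) in H2; last first.
  by apply/funext => x; apply: cvg_lim => //; exact: hg.
rewrite (_ : (fun n => \int[P]_x G n x) = (fun n => c%:E * \int[mu]_x (h n x)%:E)) in H1; last first.
  by apply/funext => k; rewrite /G int_nnsfun.
have H3 := cvgeZl (y := c%:E) isT H2.
exact: (cvg_unique _ H1 H3).
Qed.

Lemma sumEFinB (I : Type) (s : seq I) (a b : I -> R) :
  \sum_(y <- s) ((a y)%:E - (b y)%:E) = \sum_(y <- s) (a y)%:E - \sum_(y <- s) (b y)%:E.
Proof.
rewrite (eq_bigr (fun y => (a y - b y)%R%:E)) // !sumEFin.
by rewrite sumrB.
Qed.

Lemma campbell_real (X : set T) (f : T -> R) : measurable X ->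
  (forall w y, y \in Phi w -> X y) -> mu.-integrable X (EFin \o f) ->
  \int[P]_w (\sum_(y <- Phi w) f y)%:E = c%:E * \int[mu]_(x in X) (f x)%:E.
Proof.
move=> mX HX fi.
pose F := (EFin \o f) \_ X.
have Fi : mu.-integrable setT F by exact/(integrable_mkcond _ mX).
have mF : measurable_fun setT F := measurable_int _ Fi.
have hF y : F y = ((if y \in X then f y else 0%R))%:E by rewrite /F /patch; case: ifP.
have hFp y : F^\+ y = (Num.max ((if y \in X then f y else 0%R)) 0%R)%:E by rewrite funeposE hF EFin_max.
have hFn y : F^\- y = (Num.max (- (if y \in X then f y else 0%R)) 0%R)%:E by rewrite funenegE hF EFin_max.
have [mA IA] := @campbell_ge0 F^\+ (measurable_funepos mF) (fun x => funepos_ge0 F x).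
have [mB IB] := @campbell_ge0 F^\- (measurable_funeneg mF) (fun x => funeneg_ge0 F x).
have eqS w : (\sum_(y <- Phi w) f y)%:E =
   \sum_(y <- Phi w) F^\+ y - \sum_(y <- Phi w) F^\- y.
  under [in RHS]eq_bigr do rewrite hFp.
  under [X in _ = _ - X]eq_bigr do rewrite hFn.
  rewrite -sumEFinB -sumEFin; apply: eq_big_seq => y yP.
  rewrite -EFinB; congr EFin.
  rewrite mem_set; last exact: (HX w).
  exact: posneg_split.
rewrite (eq_integral (fun w => \sum_(y <- Phi w) F^\+ y - \sum_(y <- Phi w) F^\- y)); last first.
  by move=> w _; exact: eqS.
have fpf : \int[mu]_x F^\+ x \is a fin_num := integrable_pos_fin_num measurableT Fi.
have fnf : \int[mu]_x F^\- x \is a fin_num := integrable_neg_fin_num measurableT Fi.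
have iA : P.-integrable setT (fun w => \sum_(y <- Phi w) F^\+ y).
  apply/integrableP; split => //.
  under eq_integral do rewrite gee0_abs ?sume_ge0//.
  by rewrite IA ltey_eq fin_numM.
have iB : P.-integrable setT (fun w => \sum_(y <- Phi w) F^\- y).
  apply/integrableP; split => //.
  under eq_integral do rewrite gee0_abs ?sume_ge0//.
  by rewrite IB ltey_eq fin_numM.
rewrite integralB// IA IB -muleBr//; last exact: fin_num_adde_defr.
by rewrite -integralE -integral_mkcond.
Qed.
End campbell.

Theorem proposition3p7 (R : realType) (n : nat) (X : set (Rn R n))
  (Mf : set {measure set (Rn R n) -> \bar R})
  (S' : probability (Rn R n) R -> Rn R n -> R)
  (dO : measure_display) (Omega : measurableType dO) (P : probability Omega R)
  (Phi : Omega -> seq (Rn R n)) (L Q : {measure set (Rn R n) -> \bar R}) :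
  measurable X -> bounded_Rn X ->
  (forall M, Mf M -> finite_nonzero_on X M) ->
  finite_point_process X Phi ->
  Mf L -> intensity_measure P Phi L ->
  Mf Q ->
  P.-integrable [set: Omega] (fun w => (Sc S' (normalize Q) (Phi w))%:E) ->
  P.-integrable [set: Omega] (fun w => (Sc S' (normalize L) (Phi w))%:E) ->
  (consistent X Mf S' ->
     \int[P]_w (Sc S' (normalize Q) (Phi w))%:E
       >= \int[P]_w (Sc S' (normalize L) (Phi w))%:E) /\
  (strictly_consistent X Mf S' ->
     \int[P]_w (Sc S' (normalize Q) (Phi w))%:E
       = \int[P]_w (Sc S' (normalize L) (Phi w))%:E ->
     (normalize Q : set (Rn R n) -> \bar R) = normalize L).
Proof.
move=> mX _ Hf [HX Hm] ML HL MQ _ _.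
case: (Hf L ML) => /andP[L0 Loo] _.
set cL := fine (L setT).
have LE : L setT = cL%:E by rewrite fineK // ge0_fin_numE // ltW.
have cpos : (0 < cL)%R by rewrite -lte_fin -LE.
have normE : forall B,  normalize L B = L B * (cL^-1)%:E.
  move=> B;   rewrite /normalize /=; rewrite /mnormalize /=.
  rewrite LE /= eqe (gt_eqF cpos) /=.
  by [] || reflexivity.
have Hi B : measurable B ->
    \int[P]_w ((npoints B (Phi w))%:R)%:E = cL%:E * normalize L B.
  move=> mB; rewrite (HL B mB) normE muleCA -EFinM mulfV ?gt_eqF // mule1 //.
have FL : Fcal Mf (normalize L) by exists L.
have FQ : Fcal Mf (normalize Q) by exists Q.
have EQ G : (normalize L).-integrable X (fun x => (S' G x)%:E) ->
    \int[P]_w (Sc S' G (Phi w))%:E = cL%:E * \int[normalize L]_(x in X) (S' G x)%:E.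
  move=> iG; rewrite /Sc.
  apply: (@campbell_real _ _ _ _ _ P (normalize L) Phi cL Hm Hi X (S' G) mX HX iG).
split.
  move=> Hc.
  have [iQ leQ] := Hc _ _ FL FQ.
  have [iL _] := Hc _ _ FL FL.
  rewrite (EQ _ iQ) (EQ _ iL).
  by apply: lee_wpmul2l => //; rewrite lee_fin ltW.
move=> [Hc Hs] Heq.
have [iQ _] := Hc _ _ FL FQ.
have [iL _] := Hc _ _ FL FL.
apply: (Hs _ _ FL FQ).
move: Heq; rewrite (EQ _ iQ) (EQ _ iL).
have fa := integrable_fin_num mX iQ.
have fb := integrable_fin_num mX iL.
rewrite -(fineK fa) -(fineK fb) -!EFinM => hh.
have hh' := EFin_inj hh.
by rewrite (mulfI (lt0r_neq0 cpos) hh').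
Qed.
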